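(* Under the standing assumptions, for every $j$ with $1\le j\le n$ and every $z\in\mathbb C$, \begin{align*} \widetilde\alpha_2^{(2j+1)}(z)&=\widetilde\alpha_2^{(2j-1)}(z)-(z-a)\,\Theta_{1,j}^*(\bar z)\,\widehat K_{1,j}^{-1}\,\Gamma_{1,j}(a),\\ \widetilde\beta_2^{(2j+1)}(z)&=\widetilde\beta_2^{(2j-1)}(z)+(z-a)\,\Theta_{1,j}^*(\bar z)\,\widehat K_{1,j}^{-1}\,\Theta_{1,j}(a),\\ \widetilde\gamma_2^{(2j+1)}(z)&=\widetilde\gamma_2^{(2j-1)}(z)-(z-a)\,\Gamma_{1,j}^*(\bar z)\,\widehat K_{1,j}^{-1}\,\Gamma_{1,j}(a),\\ \widetilde\delta_2^{(2j+1)}(z)&=\widetilde\delta_2^{(2j-1)}(z)+(z-a)\,\Gamma_{1,j}^*(\bar z)\,\widehat K_{1,j}^{-1}\,\Theta_{1,j}(a). \end{align*}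
   Context: Let $q,n\in\mathbb N$ and let $a<b$ be real numbers. All matrices are complex; $I_q$, $0_q$ are the $q\times q$ identity and zero matrices; for a matrix-valued function $F$, $F^*(\bar z)$ means $(F(\bar z))^*$. Let $s_0,\dots,s_{2n+1}$ be Hermitian $q\times q$ matrices. Define $K_{1,j}:=(bs_{l+k}-s_{l+k+1})_{l,k=0}^{j}$ and assume (standing assumption) that $K_{1,n}$ is positive definite. Let $T_0:=0_q$ and, for $j\ge1$, let $T_j$ be the $(j+1)\times(j+1)$ block matrix (blocks of size $q\times q$) with $I_q$ in the block positions $(l+1,l)$, $l=0,\dots,j-1$, and $0_q$ elsewhere; $R_j(z):=(I_{(j+1)q}-zT_j)^{-1}$; $v_j:=\mathrm{col}(I_q,0_q,\dots,0_q)\in\mathbb C^{(j+1)q\times q}$. Let $\widetilde u_{1,j}:=\mathrm{col}(s_0,s_1-bs_0,\dots,s_j-bs_{j-1})\in\mathbb C^{(j+1)q\times q}$ ($\widetilde u_{1,0}=s_0$), and for $j\ge1$ let $\widetilde Y_{1,j}:=\mathrm{col}(bs_j-s_{j+1},\dots,bs_{2j-1}-s_{2j})$. Schur complements: $\widehat K_{1,0}:=bs_0-s_1$, $\widehat K_{1,j}:=bs_{2j}-s_{2j+1}-\widetilde Y_{1,j}^*K_{1,j-1}^{-1}\widetilde Y_{1,j}$ ($j\ge1$). Polynomials: $\Gamma_{1,0}:=I_q$, $\Theta_{1,0}:=s_0$, and for $j\ge1$: $\Gamma_{1,j}(z):=(-\widetilde Y_{1,j}^*K_{1,j-1}^{-1},\,I_q)R_j(z)v_j$,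 $\Theta_{1,j}(z):=(-\widetilde Y_{1,j}^*K_{1,j-1}^{-1},\,I_q)R_j(z)\widetilde u_{1,j}$. For $0\le j\le n$ the $2q\times2q$ matrix polynomial $\widetilde U_2^{(2j+1)}=\begin{pmatrix}\widetilde\alpha_2^{(2j+1)}&\widetilde\beta_2^{(2j+1)}\\ \widetilde\gamma_2^{(2j+1)}&\widetilde\delta_2^{(2j+1)}\end{pmatrix}$ is defined by $\widetilde\alpha_2^{(2j+1)}(z)=I_q-(z-a)\widetilde u_{1,j}^*R_j^*(\bar z)K_{1,j}^{-1}R_j(a)v_j$, $\widetilde\beta_2^{(2j+1)}(z)=(z-a)\widetilde u_{1,j}^*R_j^*(\bar z)K_{1,j}^{-1}R_j(a)\widetilde u_{1,j}$, $\widetilde\gamma_2^{(2j+1)}(z)=-(z-a)v_j^*R_j^*(\bar z)K_{1,j}^{-1}R_j(a)v_j$, $\widetilde\delta_2^{(2j+1)}(z)=I_q+(z-a)v_j^*R_j^*(\bar z)K_{1,j}^{-1}R_j(a)\widetilde u_{1,j}$. *)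

(* Defs.v *)
(* Complex numbers are modelled by an arbitrary
   numClosedFieldType R (e.g. algC), with conjugation Num.conj. *)
From HB Require Import structures.
From mathcomp Require Import all_boot all_order all_algebra.
Set Implicit Arguments. Unset Strict Implicit. Unset Printing Implicit Defensive.
Import Order.TTheory GRing.Theory Num.Theory.
Local Open Scope ring_scope.

Section Defs.
Variable R : numClosedFieldType.

Definition mxH m p (A : 'M[R]_(m, p)) : 'M[R]_(p, m) := (map_mx Num.conj A)^T.

Definition hermmx m (A : 'M[R]_m) : Prop := mxH A = A.

Definition posdefmx m (A : 'M[R]_m) : Prop :=
  forall v : 'cV[R]_m, v != 0 -> 0 < (mxH v *m A *m v) 0 0.

Lemma blk_mod_lt m q (r : 'I_(m * q)) : (r %% q < q)%N.
Proof.
case: q r => [|q] r; last by rewrite ltn_mod.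
have : (r < m * 0)%N := ltn_ord r.
move: (nat_of_ord r) => x; by rewrite muln0 ltn0.
Qed.

Definition modord m q (r : 'I_(m * q)) : 'I_q := Ordinal (blk_mod_lt r).

Definition blockmx m q (B : nat -> nat -> 'M[R]_q) : 'M[R]_(m * q) :=
  \matrix_(r, c) B (r %/ q)%N (c %/ q)%N (modord r) (modord c).

Definition bcol m q (v : nat -> 'M[R]_q) : 'M[R]_(m * q, q) :=
  \matrix_(r, c) v (r %/ q)%N (modord r) c.

Variables (q : nat) (b : R) (s : nat -> 'M[R]_q).

(* K_{1,j} is the (j+1)x(j+1) block matrix; Kmx m = K_{1,m-1} *)
Definition Kmx m : 'M[R]_(m * q) :=
  blockmx m (fun l k => b *: s (l + k)%N - s (l + k).+1).
Definition K1 j := Kmx j.+1.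

Definition Tmx j : 'M[R]_(j.+1 * q) :=
  blockmx j.+1 (fun l k => if l == k.+1 then 1%:M else 0).

Definition Rmx j (z : R) : 'M[R]_(j.+1 * q) := invmx (1%:M - z *: Tmx j).

Definition vmx j : 'M[R]_(j.+1 * q, q) :=
  bcol j.+1 (fun l => if l == 0%N then 1%:M else 0).

Definition umx j : 'M[R]_(j.+1 * q, q) :=
  bcol j.+1 (fun l => if l == 0%N then s 0 else s l - b *: s l.-1).

Definition Ymx j : 'M[R]_(j * q, q) :=
  bcol j (fun l => b *: s (j + l)%N - s (j + l).+1).

(* Khat_{1,j}; for j = 0 the correction term is an empty product (= 0) *)
Definition Khat j : 'M[R]_q :=
  if j is 0%N then b *: s 0 - s 1
  else b *: s (2 * j)%N - s (2 * j).+1 - mxH (Ymx j) *m invmx (Kmx j) *m Ymx j.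

Definition rowmx j : 'M[R]_(q, j.+1 * q) :=
  castmx (erefl q, esym (mulSnr j q))
    (row_mx (- (mxH (Ymx j) *m invmx (Kmx j))) 1%:M).

Definition Gamma j (z : R) : 'M[R]_q :=
  if j is 0%N then 1%:M else rowmx j *m Rmx j z *m vmx j.
Definition Theta j (z : R) : 'M[R]_q :=
  if j is 0%N then s 0 else rowmx j *m Rmx j z *m umx j.

Variable a : R.

Definition starc (F : R -> 'M[R]_q) (z : R) : 'M[R]_q := mxH (F (Num.conj z)).

(* the blocks of Utilde_2^{(2j+1)} *)
Definition alpha2 j (z : R) : 'M[R]_q :=
  1%:M - (z - a) *: (mxH (umx j) *m mxH (Rmx j (Num.conj z)) *m invmx (K1 j)
                      *m Rmx j a *m vmx j).
Definition beta2 j (z : R) : 'M[R]_q :=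
  (z - a) *: (mxH (umx j) *m mxH (Rmx j (Num.conj z)) *m invmx (K1 j)
               *m Rmx j a *m umx j).
Definition gamma2 j (z : R) : 'M[R]_q :=
  - ((z - a) *: (mxH (vmx j) *m mxH (Rmx j (Num.conj z)) *m invmx (K1 j)
                  *m Rmx j a *m vmx j)).
Definition delta2 j (z : R) : 'M[R]_q :=
  1%:M + (z - a) *: (mxH (vmx j) *m mxH (Rmx j (Num.conj z)) *m invmx (K1 j)
                      *m Rmx j a *m umx j).

End Defs.

(* Main.v *)
Require Import Defs.
From HB Require Import structures.
From mathcomp Require Import all_boot all_order all_algebra zify.
Set Implicit Arguments. Unset Strict Implicit. Unset Printing Implicit Defensive.
Import Order.TTheory GRing.Theory Num.Theory.
Local Open Scope ring_scope.


Section Aux.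
Variable R : numClosedFieldType.
Implicit Types (m p r : nat).

Lemma conjM' (x y : R) : Num.conj (x * y) = Num.conj x * Num.conj y.
Proof. exact: rmorphM. Qed.
Lemma conjB' (x y : R) : Num.conj (x - y) = Num.conj x - Num.conj y.
Proof. exact: rmorphB. Qed.

Lemma mxHE m p (A : 'M[R]_(m,p)) i j : mxH A i j = Num.conj (A j i).
Proof. by rewrite /mxH !mxE. Qed.

Lemma mxH_mul m p r (A : 'M[R]_(m,p)) (B : 'M[R]_(p,r)) :
  mxH (A *m B) = mxH B *m mxH A.
Proof. by rewrite /mxH map_mxM trmx_mul. Qed.

Lemma mxHK m p (A : 'M[R]_(m,p)) : mxH (mxH A) = A.
Proof. by apply/matrixP=> i j; rewrite !mxHE conjCK. Qed.

Lemma mxHD m p (A B : 'M[R]_(m,p)) : mxH (A + B) = mxH A + mxH B.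
Proof. by apply/matrixP=> i j; rewrite !mxE rmorphD. Qed.

Lemma mxHN m p (A : 'M[R]_(m,p)) : mxH (- A) = - mxH A.
Proof. by apply/matrixP=> i j; rewrite !mxE rmorphN. Qed.

Lemma mxHB m p (A B : 'M[R]_(m,p)) : mxH (A - B) = mxH A - mxH B.
Proof. by rewrite mxHD mxHN. Qed.

Lemma mxHZ m p c (A : 'M[R]_(m,p)) : mxH (c *: A) = Num.conj c *: mxH A.
Proof. by apply/matrixP=> i j; rewrite !mxE rmorphM. Qed.

Lemma mxH1 m : mxH (1%:M : 'M[R]_m) = 1%:M.
Proof. by rewrite /mxH map_mx1 trmx1. Qed.

Lemma mxH0 m p : mxH (0 : 'M[R]_(m,p)) = 0.
Proof. by apply/matrixP=> i j; rewrite !mxE rmorph0. Qed.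

Lemma mxH_inv m (A : 'M[R]_m) : mxH (invmx A) = invmx (mxH A).
Proof. by rewrite /mxH map_invmx trmx_inv. Qed.

Lemma mxH_row m p1 p2 (A : 'M[R]_(m,p1)) (B : 'M[R]_(m,p2)) :
  mxH (row_mx A B) = col_mx (mxH A) (mxH B).
Proof. by rewrite /mxH map_row_mx tr_row_mx. Qed.

Lemma mxH_col m p1 p2 (A : 'M[R]_(p1,m)) (B : 'M[R]_(p2,m)) :
  mxH (col_mx A B) = row_mx (mxH A) (mxH B).
Proof. by rewrite /mxH map_col_mx tr_col_mx. Qed.

Lemma castmx_mulE m N' N r (e : N' = N) (A : 'M[R]_(m,N')) (B : 'M[R]_(N',r)) :
  A *m B = castmx (erefl, e) A *m castmx (e, erefl) B.
Proof. by case: N / e; rewrite !castmx_id. Qed.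

Lemma castmx_mul2 m N' N r (e : N' = N) (A : 'M[R]_(m,N')) (B : 'M[R]_N')
   (C : 'M[R]_(N',r)) :
  A *m B *m C = castmx (erefl, e) A *m castmx (e, e) B *m castmx (e, erefl) C.
Proof. by case: N / e; rewrite !castmx_id. Qed.

Lemma castmx_mxH m N' N (e : N' = N) (A : 'M[R]_(N',m)) :
  castmx (erefl, e) (mxH A) = mxH (castmx (e, erefl) A).
Proof. by case: N / e; rewrite !castmx_id. Qed.

Lemma castmx_inv N' N (e : N' = N) (A : 'M[R]_N') :
  castmx (e, e) (invmx A) = invmx (castmx (e, e) A).
Proof. by case: N / e; rewrite !castmx_id. Qed.

Lemma castmx_unit N' N (e : N' = N) (A : 'M[R]_N') :
  (castmx (e, e) A \in unitmx) = (A \in unitmx).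
Proof. by case: N / e; rewrite !castmx_id. Qed.

Lemma castmx_1mZ N' N (e : N' = N) z (A : 'M[R]_N') :
  castmx (e, e) (1%:M - z *: A) = 1%:M - z *: castmx (e, e) A.
Proof. by case: N / e; rewrite !castmx_id. Qed.

Lemma castmx_mulv N' N r (e : N' = N) (A : 'M[R]_N') (B : 'M[R]_(N',r)) :
  castmx (e, erefl) (A *m B) = castmx (e, e) A *m castmx (e, erefl) B.
Proof. by case: N / e; rewrite !castmx_id. Qed.

Lemma castmx_rowK m N' N (e : N' = N) (A : 'M[R]_(m,N)) :
  castmx (erefl, e) (castmx (erefl, esym e) A) = A.
Proof. by case: N / e A => A; rewrite !castmx_id. Qed.

End Aux.

Section Blk.
Variable R : numClosedFieldType.

Definition brow m q (w : nat -> 'M[R]_q) : 'M[R]_(q, m * q) :=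
  \matrix_(r, c) w (c %/ q)%N r (modord c).

Lemma modordE m q (r : 'I_(m * q)) : nat_of_ord (modord r) = (r %% q)%N.
Proof. by []. Qed.

Lemma lshift_div m q (i : 'I_(m * q)) :
  (nat_of_ord (cast_ord (esym (mulSnr m q)) (lshift q i)) = i)%N.
Proof. by []. Qed.

Lemma modord_l m q (i : 'I_(m * q)) :
  modord (cast_ord (esym (mulSnr m q)) (lshift q i)) = modord i.
Proof. by apply/val_inj. Qed.

Lemma modord_r m q (i : 'I_q) :
  modord (cast_ord (esym (mulSnr m q)) (rshift (m * q) i)) = i.
Proof. by apply/val_inj; rewrite /= modnMDl modn_small. Qed.

Lemma div_r m q (i : 'I_q) :
  ((nat_of_ord (cast_ord (esym (mulSnr m q)) (rshift (m * q) i))) %/ q = m)%N.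
Proof.
have q0 : (0 < q)%N by apply: leq_ltn_trans (ltn_ord i).
by rewrite /= divnMDl // divn_small // addn0.
Qed.

Lemma blockmx_cast m q (B : nat -> nat -> 'M[R]_q) :
  castmx (mulSnr m q, mulSnr m q) (blockmx m.+1 B) =
  block_mx (blockmx m B) (bcol m (fun l => B l m)) (brow m (fun k => B m k)) (B m m).
Proof.
apply/matrixP=> i k; rewrite castmxE.
case: (splitP i) => i' Hi;
  [have -> : i = lshift _ i' by apply/val_inj | have -> : i = rshift _ i' by apply/val_inj];
case: (splitP k) => k' Hk;
  (try have -> : k = lshift _ k' by apply/val_inj);
  (try have -> : k = rshift _ k' by apply/val_inj);
  rewrite ?block_mxEul ?block_mxEur ?block_mxEdl ?block_mxEdr !mxE
    ?modord_l ?modord_r ?div_r //.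
Qed.

Lemma bcol_cast m q (v : nat -> 'M[R]_q) :
  castmx (mulSnr m q, erefl q) (bcol m.+1 v) = col_mx (bcol m v) (v m).
Proof.
apply/matrixP=> i k; rewrite castmxE.
case: (splitP i) => i' Hi;
  [have -> : i = lshift _ i' by apply/val_inj | have -> : i = rshift _ i' by apply/val_inj];
  rewrite ?col_mxEu ?col_mxEd !mxE ?modord_l ?modord_r ?div_r //.
all: by rewrite /= cast_ord_id.
Qed.

End Blk.

Section Str.
Variable R : numClosedFieldType.
Variables (q : nat) (b : R) (s : nat -> 'M[R]_q).

Lemma div_lt m (r : 'I_(m * q)) : (r %/ q < m)%N.
Proof.
have q0 : (0 < q)%N.
  case: q r => // r; have := ltn_ord r; move: (nat_of_ord r) => x.
  by rewrite muln0 ltn0.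
by rewrite ltn_divLR.
Qed.

Lemma hermE (S : 'M[R]_q) i k : hermmx S -> Num.conj (S i k) = S k i.
Proof. by move=> /matrixP /(_ k i); rewrite mxHE. Qed.

Lemma Kmx_herm m : Num.conj b = b -> (forall k, (k < 2 * m)%N -> hermmx (s k)) ->
  hermmx (Kmx b s m).
Proof.
move=> hb hs; apply/matrixP=> r c; rewrite mxHE !mxE conjB' conjM' hb.
have hr := div_lt r; have hc := div_lt c.
rewrite !hermE ?(addnC (r %/ q)%N) //; apply: hs; lia.
Qed.

Lemma K_cast j : Num.conj b = b -> (forall k, (k <= 2 * j)%N -> hermmx (s k)) ->
  castmx (mulSnr j q, mulSnr j q) (K1 b s j) =
  block_mx (Kmx b s j) (Ymx b s j) (mxH (Ymx b s j)) (b *: s (2 * j)%N - s (2 * j).+1).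
Proof.
move=> hb hs; rewrite /K1 /Kmx blockmx_cast -/(Kmx b s j) addnn -mul2n.
congr block_mx.
  by apply/matrixP=> r c; rewrite !mxE addnC.
apply/matrixP=> r c; rewrite mxHE !mxE conjB' conjM' hb.
have hc := div_lt c.
rewrite !hermE ?(addnC j) //; apply: hs; lia.
Qed.

Lemma T_cast j z : castmx (mulSnr j.+1 q, mulSnr j.+1 q) (1%:M - z *: @Tmx R q j.+1) =
  block_mx (1%:M - z *: @Tmx R q j) 0
     (- (z *: brow j.+1 (fun k => if j.+1 == k.+1 then (1%:M : 'M[R]_q) else 0))) 1%:M.
Proof.
rewrite castmx_1mZ /Tmx blockmx_cast scale_block_mx scalar_mx_block.
rewrite opp_block_mx add_block_mx.
rewrite eqn_leq ltnn andbF scaler0 ?subr0 ?oppr0 ?addr0 ?add0r -?/(@Tmx R q j).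
congr block_mx.
apply/matrixP=> r c; rewrite !mxE.
have hr := div_lt r.
by case: eqP => [h|_]; [lia | rewrite ?mxE mulr0 oppr0].
Qed.

Lemma T_unit j z : (1%:M - z *: @Tmx R q j) \in unitmx.
Proof.
elim: j => [|j IH].
  have -> : @Tmx R q 0 = 0.
    apply/matrixP=> r c; rewrite !mxE; have := div_lt r; have := div_lt c.
    by case: eqP => [h|_]; [lia | rewrite mxE].
  by rewrite scaler0 subr0 unitmx1.
rewrite -(castmx_unit (mulSnr j.+1 q)) T_cast unitmxE det_lblock det1 mulr1.
by rewrite -unitmxE.
Qed.

Lemma R_cast j z : exists C E,
  castmx (mulSnr j.+1 q, mulSnr j.+1 q) (@Rmx R q j.+1 z) = block_mx (@Rmx R q j z) 0 C E.
Proof.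
pose L := - (z *: brow j.+1 (fun k => if j.+1 == k.+1 then (1%:M : 'M[R]_q) else 0)).
exists (- (L *m invmx (1%:M - z *: @Tmx R q j))), 1%:M.
rewrite /Rmx castmx_inv T_cast.
have uA := T_unit j z.
have H : block_mx (1%:M - z *: @Tmx R q j) 0 L 1%:M *m
   block_mx (invmx (1%:M - z *: @Tmx R q j)) 0 (- (L *m invmx (1%:M - z *: @Tmx R q j))) 1%:M
   = 1%:M.
  rewrite mulmx_block !mulmx0 !mul0mx !mulmx1 !mul1mx !addr0 add0r mulmxV //.
  by rewrite addrN -scalar_mx_block.
have [u1 _] := mulmx1_unit H.
by rewrite -[LHS]mulmx1 -H mulKmx.
Qed.

Lemma R_col j z (X : 'M[R]_(j.+2 * q, q)) X1 x :
  castmx (mulSnr j.+1 q, erefl q) X = col_mx X1 x ->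
  exists y, castmx (mulSnr j.+1 q, erefl q) (@Rmx R q j.+1 z *m X) = col_mx (@Rmx R q j z *m X1) y.
Proof.
move=> hX; have [C [E hR]] := R_cast j z.
rewrite castmx_mulv hR hX mul_block_col mul0mx addr0.
by eexists.
Qed.

Lemma v_cast j : castmx (mulSnr j.+1 q, erefl q) (@vmx R q j.+1) = col_mx (@vmx R q j) 0.
Proof. by rewrite /vmx bcol_cast. Qed.

Lemma u_cast j : castmx (mulSnr j.+1 q, erefl q) (umx b s j.+1) =
  col_mx (umx b s j) (s j.+1 - b *: s j).
Proof. by rewrite /umx bcol_cast. Qed.

End Str.

Section Alg.
Variable R : numClosedFieldType.

Lemma block_inv N m (A : 'M[R]_N) (Y : 'M[R]_(N,m)) (D : 'M[R]_m) :
  A \in unitmx -> mxH (invmx A) = invmx A ->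
  (D - mxH Y *m invmx A *m Y) \in unitmx ->
  invmx (block_mx A Y (mxH Y) D) =
  block_mx (invmx A) 0 0 0 +
  mxH (row_mx (-(mxH Y *m invmx A)) 1%:M) *m invmx (D - mxH Y *m invmx A *m Y)
     *m row_mx (-(mxH Y *m invmx A)) 1%:M.
Proof.
move=> uA hA uH.
set H := D - _ in uH *; set r := row_mx _ _.
have hr : mxH r = col_mx (- (invmx A *m Y)) 1%:M.
  by rewrite /r mxH_row mxHN mxH_mul hA mxHK mxH1.
have E : block_mx A Y (mxH Y) D *m (block_mx (invmx A) 0 0 0 + mxH r *m invmx H *m r)
   = 1%:M.
  rewrite mulmxDr hr !mulmxA mulmx_block mul_block_col !mulmx0 !addr0 (mulmxV uA).
  rewrite !mulmxN mulmxA (mulmxV uA) mul1mx mulmx1 addNr mulmx1 mulmxA.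
  rewrite !mul_col_mx !mul0mx (addrC (- _) D) -/H (mulmxV uH) mul1mx.
  have -> : col_mx (0 : 'M[R]_(N, N + m)) r = block_mx 0 0 (-(mxH Y *m invmx A)) 1%:M.
    by rewrite block_mxEv row_mx0.
  by rewrite add_block_mx !addr0 addrN add0r -scalar_mx_block.
have [u1 _] := mulmx1_unit E.
by rewrite -[LHS]mulmx1 -E mulKmx.
Qed.

Lemma schur_unit N m (A : 'M[R]_N) (Y : 'M[R]_(N,m)) (D : 'M[R]_m) :
  A \in unitmx -> block_mx A Y (mxH Y) D \in unitmx ->
  (D - mxH Y *m invmx A *m Y) \in unitmx.
Proof.
move=> uA uK.
have E : block_mx A Y (mxH Y) D =
   block_mx 1%:M 0 (mxH Y *m invmx A) 1%:M *m block_mx A Y 0 (D - mxH Y *m invmx A *m Y).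
  rewrite mulmx_block !mul1mx !mul0mx ?mulmx0 !addr0 ?add0r (mulmxKV uA).
  by rewrite addrC subrK.
move: uK; rewrite E !unitmxE det_mulmx det_lblock det_ublock !det1 !mul1r unitrM.
by case/andP.
Qed.

Lemma posdef_cast N' N (e : N' = N) (M : 'M[R]_N') :
  posdefmx (castmx (e, e) M) -> posdefmx M.
Proof. by case: N / e; rewrite castmx_id. Qed.

Lemma posdef_ul N m (A : 'M[R]_N) (B : 'M[R]_(N,m)) C D :
  posdefmx (block_mx A B C D) -> posdefmx A.
Proof.
move=> hp v v0.
have := hp (col_mx v 0); rewrite col_mx_eq0 (negbTE v0) => /(_ isT).
by rewrite mxH_col mxH0 mul_row_block !mul0mx !addr0 mul_row_col mulmx0 addr0.
Qed.

Lemma posdef_unit N (M : 'M[R]_N) : posdefmx M -> M \in unitmx.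
Proof.
move=> hp; apply/negPn/negP => nu.
have : kermx M^T != 0 by rewrite kermx_eq0 row_free_unit unitmx_tr.
case/rowV0Pn => v /sub_kermxP hv v0.
have := hp v^T; rewrite trmx_eq0 v0 => /(_ isT).
have hMv : M *m v^T = 0 by rewrite -[M]trmxK -trmx_mul hv trmx0.
by rewrite -mulmxA hMv mulmx0 mxE ltxx.
Qed.

End Alg.

Section Main.
Variable R : numClosedFieldType.
Variables (q : nat) (b : R) (s : nat -> 'M[R]_q) (a : R).

Lemma posdef_castV N' N (e : N' = N) (M : 'M[R]_N') :
  posdefmx M -> posdefmx (castmx (e, e) M).
Proof. by case: N / e; rewrite castmx_id. Qed.

Lemma posdef_Kmx m p : posdefmx (Kmx b s (m + p)) -> posdefmx (Kmx b s m).
Proof.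
elim: p => [|p IH]; first by rewrite addn0.
rewrite addnS => h; apply: IH.
move: h => /(posdef_castV (mulSnr (m + p) q)).
by rewrite /Kmx blockmx_cast => /posdef_ul.
Qed.

Lemma step k z (X W : 'M[R]_(k.+2 * q, q)) X1 x W1 w :
  Num.conj b = b -> (forall k0, (k0 <= 2 * k.+1)%N -> hermmx (s k0)) ->
  posdefmx (Kmx b s k.+1) -> posdefmx (K1 b s k.+1) ->
  castmx (mulSnr k.+1 q, erefl q) X = col_mx X1 x ->
  castmx (mulSnr k.+1 q, erefl q) W = col_mx W1 w ->
  mxH X *m mxH (@Rmx R q k.+1 z) *m invmx (K1 b s k.+1) *m @Rmx R q k.+1 a *m W =
  mxH X1 *m mxH (@Rmx R q k z) *m invmx (K1 b s k) *m @Rmx R q k a *m W1 +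
  mxH (rowmx b s k.+1 *m @Rmx R q k.+1 z *m X) *m invmx (Khat b s k.+1)
     *m (rowmx b s k.+1 *m @Rmx R q k.+1 a *m W).
Proof.
move=> hb hs hpA hpK hX hW.
have [y1 hP] := R_col z hX; have [y2 hQ] := R_col a hW.
have uA := posdef_unit hpA.
have uK : castmx (mulSnr k.+1 q, mulSnr k.+1 q) (K1 b s k.+1) \in unitmx.
  by rewrite castmx_unit; apply: posdef_unit.
rewrite K_cast // in uK.
have hAi : mxH (invmx (Kmx b s k.+1)) = invmx (Kmx b s k.+1).
  rewrite mxH_inv Kmx_herm // => k0 hk0; apply: hs; lia.
have uH := schur_unit uA uK.
have E1 : forall N (M : 'M[R]_(N, q)) (B : 'M[R]_N) (C : 'M[R]_N) (D : 'M[R]_(N,q)) P,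
    mxH M *m mxH B *m P *m C *m D = mxH (B *m M) *m P *m (C *m D).
  by move=> *; rewrite mxH_mul !mulmxA.
rewrite !E1 (castmx_mul2 (mulSnr k.+1 q)) castmx_mxH hP hQ castmx_inv K_cast //.
rewrite block_inv //.
rewrite -!(mulmxA (rowmx _ _ _)) !(castmx_mulE (mulSnr k.+1 q) (rowmx _ _ _)) hP hQ castmx_rowK.
rewrite mulmxDr mulmxDl; congr (_ + _).
  rewrite mxH_col mul_row_block !mulmx0 !addr0 mul_row_col mul0mx addr0.
  by rewrite !mulmxA.
by rewrite mxH_mul !mulmxA.
Qed.

Lemma main_k n k z : Num.conj b = b ->
  (forall k0, (k0 <= (2 * n).+1)%N -> hermmx (s k0)) ->
  posdefmx (K1 b s n) -> (k.+1 <= n)%N ->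
  [/\ alpha2 b s a k.+1 z = alpha2 b s a k z
          - (z - a) *: (starc (Theta b s k.+1) z *m invmx (Khat b s k.+1) *m Gamma b s k.+1 a),
        beta2 b s a k.+1 z = beta2 b s a k z
          + (z - a) *: (starc (Theta b s k.+1) z *m invmx (Khat b s k.+1) *m Theta b s k.+1 a),
        gamma2 b s a k.+1 z = gamma2 b s a k z
          - (z - a) *: (starc (Gamma b s k.+1) z *m invmx (Khat b s k.+1) *m Gamma b s k.+1 a)
      & delta2 b s a k.+1 z = delta2 b s a k z
          + (z - a) *: (starc (Gamma b s k.+1) z *m invmx (Khat b s k.+1) *m Theta b s k.+1 a)].
Proof.
move=> hb hs hp hkn.
have hs' : forall k0, (k0 <= 2 * k.+1)%N -> hermmx (s k0).
  by move=> k0 hk0; apply: hs; lia.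
have hpK : posdefmx (K1 b s k.+1).
  apply: (@posdef_Kmx _ (n - k.+1)); rewrite /K1 in hp.
  by have -> : (k.+2 + (n - k.+1) = n.+1)%N by lia.
have hpA : posdefmx (Kmx b s k.+1).
  by apply: (@posdef_Kmx _ 1); rewrite addn1.
have St := fun X W X1 x W1 w => @step k (Num.conj z) X W X1 x W1 w hb hs' hpA hpK.
rewrite /alpha2 /beta2 /gamma2 /delta2 /starc /Theta /Gamma.
rewrite (St _ _ _ _ _ _ (@u_cast R q b s k) (@v_cast R q k)).
rewrite (St _ _ _ _ _ _ (@u_cast R q b s k) (@u_cast R q b s k)).
rewrite (St _ _ _ _ _ _ (@v_cast R q k) (@v_cast R q k)).
rewrite (St _ _ _ _ _ _ (@v_cast R q k) (@u_cast R q b s k)).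
by rewrite !scalerDr !opprD !addrA.
Qed.
End Main.

Theorem mainTheorem2 (R : numClosedFieldType) (q n : nat) (a b : R)
  (s : nat -> 'M[R]_q)
  (ha : a \is Num.real) (hb : b \is Num.real) (hab : a < b)
  (hherm : forall k, (k <= (2 * n).+1)%N -> hermmx (s k))
  (hpos : posdefmx (K1 b s n)) :
  forall j : nat, (1 <= j <= n)%N -> forall z : R,
    [/\ alpha2 b s a j z = alpha2 b s a j.-1 z
          - (z - a) *: (starc (Theta b s j) z *m invmx (Khat b s j) *m Gamma b s j a),
        beta2 b s a j z = beta2 b s a j.-1 z
          + (z - a) *: (starc (Theta b s j) z *m invmx (Khat b s j) *m Theta b s j a),
        gamma2 b s a j z = gamma2 b s a j.-1 z
          - (z - a) *: (starc (Gamma b s j) z *m invmx (Khat b s j) *m Gamma b s j a)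
      & delta2 b s a j z = delta2 b s a j.-1 z
          + (z - a) *: (starc (Gamma b s j) z *m invmx (Khat b s j) *m Theta b s j a)].
Proof.
case=> [|k] // /andP [_ hk] z.
exact: main_k (conj_Creal hb) hherm hpos hk.
Qed.
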